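(* Let $\eta\in\mathbb{R}\setminus\{0\}$, let $\varepsilon',\ell,\delta,\delta'>0$, let $A\in\mathrm{SL}(2,\mathbb{Z})$ and set $v=A(0,1)$. There exists $\xi_0=\xi_0(|\eta|,A,\ell,\varepsilon',\delta,\delta')\in\mathbb{N}^*$ with the following property. Let $X\subseteq\mathbb{R}^2$ be non-empty, let $\varepsilon>0$, and let $\gamma$ be a union of segments in $\mathbb{R}^2$ which is $\varepsilon$-dense in $X$, such that the direction of each segment of $\gamma$ is at distance greater than $\delta$ from the direction of $v$ on $\mathbb{S}^1$, and each segment of $\gamma$ has length greater than $\ell$. Then for every integer $\xi\ge\xi_0$ there exists a subset $\gamma'\subseteq A\circ J_{\eta,\xi}\circ A^{-1}(\gamma)$ which is a union of segments, is $(\varepsilon+\varepsilon')$-dense in $\mathrm{Str}(X,\eta v)$, whose segments have directions within distance $\delta'$ of the direction of $v$ on $\mathbb{S}^1$, and whose segments have lengths greater than $\|A^{-1}\|^{-1}|\eta|$.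
   Context: Directions of non-zero vectors of $\mathbb{R}^2$ are identified with the unit circle $\mathbb{S}^1$, equipped with the Riemannian metric induced by the Euclidean metric of $\mathbb{R}^2$. $\|\cdot\|$ is the operator norm. $X$ is $\varepsilon$-dense in $Y$ if $Y\subseteq B_\varepsilon(X)$ (open $\varepsilon$-neighbourhood). $\mathrm{Str}(X,w)=X+[-w,w]$ (Minkowski sum). For $\xi\in\mathbb{N}^*$, $\phi_\xi(x)=(-1)^{z+1}(4\xi x-2z-1)$ for $z\in\mathbb{Z}$, $x\in[\frac{z}{2\xi},\frac{z+1}{2\xi})$, and $J_{\eta,\xi}(x,y)=(x,y+\eta\phi_\xi(x))$. *)

(* Defs.v *)
From Stdlib Require Import Reals ZArith.
From Coquelicot Require Import Coquelicot.
Open Scope R_scope.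

Definition pt := (R * R)%type.

Definition padd (p q : pt) : pt := (fst p + fst q, snd p + snd q).
Definition psub (p q : pt) : pt := (fst p - fst q, snd p - snd q).
Definition pscal (t : R) (p : pt) : pt := (t * fst p, t * snd p).
Definition pdot (p q : pt) : R := fst p * fst q + snd p * snd q.
Definition pnorm (p : pt) : R := sqrt (pdot p p).
Definition pdist (p q : pt) : R := pnorm (psub p q).

(* Riemannian (angular) distance on S^1 between the directions of two
   non-zero vectors u and v. *)
Definition dir_dist (u v : pt) : R :=
  acos (pdot u v / (pnorm u * pnorm v)).

Definition seg (p q : pt) : pt -> Prop :=
  fun x => exists t, 0 <= t <= 1 /\ x = padd p (pscal t (psub q p)).

Definition is_union_of_segs (I : Type) (p q : I -> pt) (g : pt -> Prop) : Prop :=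
  forall x, g x <-> exists i, seg (p i) (q i) x.

(* Y is eps-dense ... : Y is contained in the open eps-neighbourhood of X *)
Definition eps_dense (X : pt -> Prop) (eps : R) (Y : pt -> Prop) : Prop :=
  forall y, Y y -> exists x, X x /\ pdist x y < eps.

Definition Str (X : pt -> Prop) (w : pt) : pt -> Prop :=
  fun y => exists x t, X x /\ -1 <= t <= 1 /\ y = padd x (pscal t w).

Record mat2Z := Mat2Z { ma : Z; mb : Z; mc : Z; md : Z }.
Definition in_SL2Z (A : mat2Z) : Prop :=
  (ma A * md A - mb A * mc A = 1)%Z.
Definition mapp (A : mat2Z) (x : pt) : pt :=
  (IZR (ma A) * fst x + IZR (mb A) * snd x,
   IZR (mc A) * fst x + IZR (md A) * snd x).
(* inverse of a determinant-one matrix *)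
Definition minv (A : mat2Z) : mat2Z :=
  Mat2Z (md A) (- mb A) (- mc A) (ma A).

Definition opnorm (A : mat2Z) : R :=
  real (Lub_Rbar (fun r => exists x, pnorm x = 1 /\ r = pnorm (mapp A x))).

Definition phi (xi : nat) (x : R) : R :=
  let z := Int_part (2 * INR xi * x) in
  powerRZ (-1) (z + 1) * (4 * INR xi * x - 2 * IZR z - 1).

Definition J (eta : R) (xi : nat) (p : pt) : pt :=
  (fst p, snd p + eta * phi xi (fst p)).

Definition img (f : pt -> pt) (g : pt -> Prop) : pt -> Prop :=
  fun y => exists x, g x /\ y = f x.

(* Main.v *)
Require Import Defs.
From Stdlib Require Import Reals ZArith Lra Psatz.
From Coquelicot Require Import Coquelicot.
Open Scope R_scope.

Definition cross (u v : pt) : R := fst u * snd v - snd u * fst v.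

Lemma pdot_nonneg u : 0 <= pdot u u.
Proof. destruct u as [a b]; unfold pdot; simpl; nra. Qed.

Lemma pnorm_nonneg u : 0 <= pnorm u.
Proof. apply sqrt_pos. Qed.

Lemma pnorm_sq u : pnorm u * pnorm u = pdot u u.
Proof. apply sqrt_sqrt, pdot_nonneg. Qed.

Lemma lagrange u v : (pdot u v)^2 + (cross u v)^2 = pdot u u * pdot v v.
Proof. destruct u, v; unfold pdot, cross; simpl; ring. Qed.

Lemma sq_le_nonneg a b : 0 <= a -> 0 <= b -> a * a <= b * b -> a <= b.
Proof. intros; nra. Qed.

Lemma pcauchy u w : pdot u w <= pnorm u * pnorm w.
Proof.
  pose proof (lagrange u w). pose proof (pnorm_sq u). pose proof (pnorm_sq w).
  pose proof (pnorm_nonneg u). pose proof (pnorm_nonneg w).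
  assert (HP : (pdot u w)^2 <= (pnorm u * pnorm w)^2).
  { replace ((pnorm u * pnorm w)^2) with (pdot u u * pdot w w) by nra.
    pose proof (pow2_ge_0 (cross u w)). lra. }
  set (P := pnorm u * pnorm w) in *. assert (0 <= P) by (apply Rmult_le_pos; auto).
  destruct (Rle_dec (pdot u w) P); auto.
  exfalso. assert (P * P < pdot u w * pdot u w) by (apply Rmult_le_0_lt_compat; lra). nra.
Qed.

Lemma pcauchy_abs u w : Rabs (pdot u w) <= pnorm u * pnorm w.
Proof.
  pose proof (pcauchy u w). pose proof (pcauchy (pscal (-1) u) w).
  assert (pdot (pscal (-1) u) w = - pdot u w) by (destruct u, w; unfold pdot, pscal; simpl; ring).
  assert (E2 : pnorm (pscal (-1) u) = pnorm u).
  { unfold pnorm; f_equal; destruct u; unfold pdot, pscal; simpl; ring. }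
  match goal with H1 : pdot (pscal _ _) _ = _ |- _ => rewrite H1, E2 in H0 end.
  unfold Rabs; destruct (Rcase_abs (pdot u w)); lra.
Qed.

Lemma pnorm_triangle u w : pnorm (padd u w) <= pnorm u + pnorm w.
Proof.
  apply sq_le_nonneg. apply pnorm_nonneg.
  pose proof (pnorm_nonneg u); pose proof (pnorm_nonneg w); lra.
  rewrite pnorm_sq.
  pose proof (pnorm_sq u). pose proof (pnorm_sq w). pose proof (pcauchy u w).
  assert (pdot (padd u w) (padd u w) = pdot u u + 2 * pdot u w + pdot w w)
    by (destruct u, w; unfold pdot, padd; simpl; ring).
  nra.
Qed.

Lemma abs_fst_le u : Rabs (fst u) <= pnorm u.
Proof.
  apply sq_le_nonneg. apply Rabs_pos. apply pnorm_nonneg.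
  rewrite pnorm_sq. rewrite <- Rabs_mult, Rabs_right by nra.
  destruct u; unfold pdot; simpl; nra.
Qed.

Lemma abs_snd_le u : Rabs (snd u) <= pnorm u.
Proof.
  apply sq_le_nonneg. apply Rabs_pos. apply pnorm_nonneg.
  rewrite pnorm_sq. rewrite <- Rabs_mult, Rabs_right by nra.
  destruct u; unfold pdot; simpl; nra.
Qed.

Lemma pnorm_le_abs u : pnorm u <= Rabs (fst u) + Rabs (snd u).
Proof.
  apply sq_le_nonneg. apply pnorm_nonneg.
  pose proof (Rabs_pos (fst u)); pose proof (Rabs_pos (snd u)); lra.
  rewrite pnorm_sq. destruct u as [a b]; unfold pdot; simpl.
  pose proof (Rabs_pos a); pose proof (Rabs_pos b).
  assert (Rabs a * Rabs a = a * a) by (rewrite <- Rabs_mult; apply Rabs_right; nra).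
  assert (Rabs b * Rabs b = b * b) by (rewrite <- Rabs_mult; apply Rabs_right; nra).
  nra.
Qed.

Lemma pnorm_scal t u : pnorm (pscal t u) = Rabs t * pnorm u.
Proof.
  unfold pnorm. rewrite <- sqrt_Rsqr_abs, <- sqrt_mult_alt.
  f_equal; destruct u; unfold pdot, pscal, Rsqr; simpl; ring.
  apply Rle_0_sqr.
Qed.

Lemma pnorm_opp_sub p q : pnorm (psub p q) = pnorm (psub q p).
Proof. unfold pnorm; f_equal; destruct p, q; unfold pdot, psub; simpl; ring. Qed.

Lemma pnorm_pos u : fst u <> 0 \/ snd u <> 0 -> 0 < pnorm u.
Proof.
  intros H. unfold pnorm. apply sqrt_lt_R0. destruct u as [a b]; unfold pdot; simpl in *.
  destruct H; nra.
Qed.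

Definition Nm (M : mat2Z) : R :=
  Rabs (IZR (ma M)) + Rabs (IZR (mb M)) + Rabs (IZR (mc M)) + Rabs (IZR (md M)) + 1.

Lemma Nm_pos M : 1 <= Nm M.
Proof. unfold Nm. pose proof (Rabs_pos (IZR (ma M))). pose proof (Rabs_pos (IZR (mb M))).
  pose proof (Rabs_pos (IZR (mc M))). pose proof (Rabs_pos (IZR (md M))). lra. Qed.

Lemma mapp_bound M u : pnorm (mapp M u) <= Nm M * pnorm u.
Proof.
  eapply Rle_trans. apply pnorm_le_abs.
  pose proof (abs_fst_le u). pose proof (abs_snd_le u). pose proof (pnorm_nonneg u).
  destruct u as [x y]; unfold mapp, Nm; simpl in *.
  set (a := IZR (ma M)) in *; set (b := IZR (mb M)) in *;
  set (c := IZR (mc M)) in *; set (d := IZR (md M)) in *.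
  pose proof (Rabs_triang (a*x) (b*y)). pose proof (Rabs_triang (c*x) (d*y)).
  rewrite !Rabs_mult in *.
  pose proof (Rabs_pos a); pose proof (Rabs_pos b); pose proof (Rabs_pos c); pose proof (Rabs_pos d).
  pose proof (Rabs_pos x); pose proof (Rabs_pos y).
  nra.
Qed.

Lemma mapp_add M u w : mapp M (padd u w) = padd (mapp M u) (mapp M w).
Proof. destruct u, w; unfold mapp, padd; simpl; f_equal; ring. Qed.
Lemma mapp_sub M u w : mapp M (psub u w) = psub (mapp M u) (mapp M w).
Proof. destruct u, w; unfold mapp, psub; simpl; f_equal; ring. Qed.
Lemma mapp_scal M t u : mapp M (pscal t u) = pscal t (mapp M u).
Proof. destruct u; unfold mapp, pscal; simpl; f_equal; ring. Qed.

Lemma det_R A : in_SL2Z A -> IZR (ma A) * IZR (md A) - IZR (mb A) * IZR (mc A) = 1.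
Proof. unfold in_SL2Z; intros H. apply (f_equal IZR) in H. rewrite minus_IZR, !mult_IZR in H. exact H. Qed.

Lemma mapp_inv_l A u : in_SL2Z A -> mapp (minv A) (mapp A u) = u.
Proof. intros H; apply det_R in H. destruct u as [x y]; unfold mapp, minv; simpl; rewrite !opp_IZR.
  f_equal; [transitivity (x * (IZR (ma A) * IZR (md A) - IZR (mb A) * IZR (mc A)))
           | transitivity (y * (IZR (ma A) * IZR (md A) - IZR (mb A) * IZR (mc A)))];
  try ring; rewrite H; ring. Qed.
Lemma mapp_inv_r A u : in_SL2Z A -> mapp A (mapp (minv A) u) = u.
Proof. intros H; apply det_R in H. destruct u as [x y]; unfold mapp, minv; simpl; rewrite !opp_IZR.
  f_equal; [transitivity (x * (IZR (ma A) * IZR (md A) - IZR (mb A) * IZR (mc A)))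
           | transitivity (y * (IZR (ma A) * IZR (md A) - IZR (mb A) * IZR (mc A)))];
  try ring; rewrite H; ring. Qed.

Lemma minv_fst_cross A d : fst (mapp (minv A) d) = cross d (mapp A (0,1)).
Proof. destruct d; unfold mapp, minv, cross; simpl; rewrite !opp_IZR; ring. Qed.

Lemma opnorm_bound M u : pnorm (mapp M u) <= opnorm M * pnorm u.
Proof.
  set (E := fun r => exists x, pnorm x = 1 /\ r = pnorm (mapp M x)).
  assert (HL := Lub_Rbar_correct E).
  unfold opnorm. fold E.
  destruct HL as [Hub Hlub].
  assert (H1 : Rbar_le (Lub_Rbar E) (Finite (Nm M))).
  { apply Hlub. intros r [x [Hx ->]]. simpl. rewrite <- (Rmult_1_r (Nm M)), <- Hx. apply mapp_bound. }
  assert (H2 : Rbar_le (Finite (pnorm (mapp M (1,0)))) (Lub_Rbar E)).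
  { apply Hub. exists (1,0). split; auto. unfold pnorm, pdot; simpl.
    replace (1*1+0*0) with 1 by ring. apply sqrt_1. }
  destruct (Lub_Rbar E) as [r| |] eqn:Er; simpl in H1, H2; try contradiction.
  simpl.
  assert (Hunit : forall x, pnorm x = 1 -> pnorm (mapp M x) <= r).
  { intros x Hx. assert (Rbar_le (Finite (pnorm (mapp M x))) (Finite r)).
    { apply Hub. exists x; auto. } exact H. }
  destruct (Req_dec (pnorm u) 0) as [H0|H0].
  - assert (u = (0,0)).
    { destruct u as [a b]. unfold pnorm, pdot in H0; simpl in H0.
      apply sqrt_eq_0 in H0; [|nra]. f_equal; nra. }
    subst u. unfold mapp; simpl. rewrite H0. unfold pnorm, pdot; simpl.
    replace ((IZR (ma M) * 0 + IZR (mb M) * 0) * (IZR (ma M) * 0 + IZR (mb M) * 0) +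
       (IZR (mc M) * 0 + IZR (md M) * 0) * (IZR (mc M) * 0 + IZR (md M) * 0)) with 0 by ring.
    rewrite sqrt_0. lra.
  - pose proof (pnorm_nonneg u).
    set (x := pscal (/ pnorm u) u).
    assert (Hx : pnorm x = 1).
    { unfold x. rewrite pnorm_scal, Rabs_right. field. auto.
      apply Rle_ge, Rlt_le, Rinv_0_lt_compat. lra. }
    assert (Hu : u = pscal (pnorm u) x).
    { unfold x. destruct u; unfold pscal; simpl. f_equal; field; auto. }
    rewrite Hu at 1. rewrite mapp_scal, pnorm_scal, Rabs_right by lra.
    specialize (Hunit x Hx). nra.
Qed.

Lemma opnorm_lower A w : in_SL2Z A -> pnorm w <= opnorm (minv A) * pnorm (mapp A w).
Proof. intros H. rewrite <- (mapp_inv_l A w H) at 1. apply opnorm_bound. Qed.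

Lemma dir_hyp d v delta : 0 < delta ->
  0 < pnorm d -> 0 < pnorm v ->
  dir_dist d v > delta -> dir_dist (pscal (-1) d) v > delta ->
  (cross d v)^2 > (sin delta)^2 * (pdot d d * pdot v v).
Proof.
  intros Hd Hnd Hnv H1 H2. unfold dir_dist in *.
  assert (E1 : pdot (pscal (-1) d) v = - pdot d v) by (destruct d, v; unfold pdot, pscal; simpl; ring).
  assert (E2 : pnorm (pscal (-1) d) = pnorm d) by (rewrite pnorm_scal, Rabs_m1; ring).
  rewrite E1, E2 in H2.
  set (c := pdot d v / (pnorm d * pnorm v)) in *.
  assert (Hc : -1 <= c <= 1).
  { pose proof (pcauchy_abs d v). unfold c. apply Rabs_le_between.
    unfold Rdiv. rewrite Rabs_mult, Rabs_inv, (Rabs_right (pnorm d * pnorm v)) by nra.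
    apply (Rmult_le_reg_r (pnorm d * pnorm v)). nra.
    rewrite Rmult_assoc, Rinv_l by nra. lra. }
  replace (- pdot d v / (pnorm d * pnorm v)) with (- c) in H2 by (unfold c; field; nra).
  pose proof (acos_bound c). pose proof (acos_bound (-c)).
  assert (c < cos delta).
  { rewrite <- (cos_acos c) by lra. apply cos_decreasing_1; lra. }
  assert (- c < cos delta).
  { rewrite <- (cos_acos (-c)) by lra. apply cos_decreasing_1; lra. }
  assert (c^2 < (cos delta)^2) by nra.
  pose proof (sin2_cos2 delta). unfold Rsqr in *.
  pose proof (lagrange d v) as HL. rewrite <- (pnorm_sq d), <- (pnorm_sq v) in *.
  assert (HE : pdot d v = c * (pnorm d * pnorm v)) by (unfold c; field; nra).
  rewrite HE in HL.
  assert (0 < pnorm d * pnorm v) by nra.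
  assert (HX : (cross d v)^2 = (1 - c^2) * (pnorm d * pnorm v)^2) by nra.
  rewrite HX.
  replace (sin delta * sin delta) with (1 - cos delta * cos delta) by lra.
  assert (0 < (pnorm d * pnorm v)^2) by nra.
  nra.
Qed.

Lemma dir_concl D v dd : 0 < dd <= 1 -> 0 < pnorm D -> 0 < pnorm v ->
  (cross D v)^2 <= (sin dd)^2 * (pdot D D * pdot v v) ->
  dir_dist D v <= dd \/ dir_dist (pscal (-1) D) v <= dd.
Proof.
  intros Hdd HD Hv H. unfold dir_dist.
  assert (E1 : pdot (pscal (-1) D) v = - pdot D v) by (destruct D, v; unfold pdot, pscal; simpl; ring).
  assert (E2 : pnorm (pscal (-1) D) = pnorm D) by (rewrite pnorm_scal, Rabs_m1; ring).
  rewrite E1, E2.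
  set (c := pdot D v / (pnorm D * pnorm v)).
  replace (- pdot D v / (pnorm D * pnorm v)) with (- c) by (unfold c; field; nra).
  assert (Hc : -1 <= c <= 1).
  { pose proof (pcauchy_abs D v). unfold c. apply Rabs_le_between.
    unfold Rdiv. rewrite Rabs_mult, Rabs_inv, (Rabs_right (pnorm D * pnorm v)) by nra.
    apply (Rmult_le_reg_r (pnorm D * pnorm v)). nra.
    rewrite Rmult_assoc, Rinv_l by nra. lra. }
  pose proof (lagrange D v) as HL. rewrite <- (pnorm_sq D), <- (pnorm_sq v) in *.
  assert (HE : pdot D v = c * (pnorm D * pnorm v)) by (unfold c; field; nra).
  rewrite HE in HL.
  assert (0 < (pnorm D * pnorm v)^2) by (apply pow_lt, Rmult_lt_0_compat; auto).
  assert (Hc2 : (cos dd)^2 <= c^2).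
  { pose proof (sin2_cos2 dd). unfold Rsqr in *.
    assert ((1 - c^2) * (pnorm D * pnorm v)^2 <= (sin dd)^2 * (pnorm D * pnorm v)^2) by nra.
    assert (1 - c^2 <= (sin dd)^2).
    { apply (Rmult_le_reg_r ((pnorm D * pnorm v)^2)); auto. }
    nra. }
  assert (Hcos : 0 < cos dd) by (apply cos_gt_0; pose proof PI2_1; lra).
  assert (key : forall c', -1 <= c' <= 1 -> cos dd <= c' -> acos c' <= dd).
  { intros c' Hc' Hle. pose proof (acos_bound c'). destruct (Rle_dec (acos c') dd); auto.
    exfalso. assert (Hlt : cos (acos c') < cos dd).
    { pose proof PI2_1; pose proof PI_RGT_0. apply cos_decreasing_1; lra. }
    rewrite cos_acos in Hlt by lra. lra. }
  destruct (Rle_dec 0 c).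
  - left. apply key; auto. nra.
  - right. apply key. lra. nra.
Qed.

Lemma Int_part_eq r z : IZR z <= r < IZR z + 1 -> Int_part r = z.
Proof. intros H. symmetry. apply Int_part_spec. lra. Qed.

Lemma sigma_pm n : powerRZ (-1) n = 1 \/ powerRZ (-1) n = -1.
Proof.
  assert (Hk : forall k, (-1)^k = 1 \/ (-1)^k = -1).
  { induction k; simpl; [left; ring|]. destruct IHk as [-> | ->]; [right|left]; ring. }
  destruct n as [|p|p]; simpl; auto.
  destruct (Hk (Pos.to_nat p)) as [-> | ->]; [left|right]; field.
Qed.

Lemma sigma_next n : powerRZ (-1) (n + 1) = - powerRZ (-1) n.
Proof. rewrite powerRZ_add by lra. simpl. ring. Qed.

Lemma phi_tooth xi z t : (1 <= xi)%nat -> 0 <= t <= 1 ->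
  phi xi (IZR z * / (2 * INR xi) + t * / (2 * INR xi)) = powerRZ (-1) (z + 1) * (2 * t - 1).
Proof.
  intros Hxi Ht. assert (Hx : 0 < INR xi) by (apply lt_0_INR; lia).
  unfold phi.
  replace (2 * INR xi * (IZR z * / (2 * INR xi) + t * / (2 * INR xi))) with (IZR z + t) by (field; lra).
  replace (4 * INR xi * (IZR z * / (2 * INR xi) + t * / (2 * INR xi))) with (2 * (IZR z + t)) by (field; lra).
  destruct (Rlt_dec t 1).
  - rewrite (Int_part_eq _ z) by lra. ring.
  - assert (t = 1) by lra. subst t.
    rewrite (Int_part_eq _ (z+1)) by (rewrite plus_IZR; simpl; lra).
    rewrite sigma_next, plus_IZR. simpl. ring.
Qed.

Lemma select h a b s : 0 < h -> a <= s <= b -> 2 * h <= b - a ->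
  exists z : Z, a <= IZR z * h /\ IZR z * h + h <= b /\ s - 2 * h <= IZR z * h <= s + h.
Proof.
  intros Hh Hs Hab.
  destruct (archimed (a / h)) as [Hm1 Hm2].
  destruct (archimed (s / h)) as [Hn1 Hn2].
  set (m := up (a / h)) in *. set (n := (up (s / h) - 2)%Z).
  assert (Ha1 : a < IZR m * h).
  { apply (Rmult_lt_compat_r h) in Hm1; auto. unfold Rdiv in Hm1. rewrite Rmult_assoc, Rinv_l in Hm1; lra. }
  assert (Ha2 : IZR m * h <= a + h).
  { assert (IZR m <= a / h + 1) by lra. apply (Rmult_le_compat_r h) in H; [|lra].
    unfold Rdiv in H. rewrite Rmult_plus_distr_r, Rmult_assoc, Rinv_l in H; lra. }
  assert (Hs1 : s < (IZR n + 2) * h).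
  { unfold n. rewrite minus_IZR. replace (IZR (up (s/h)) - IZR 2 + 2) with (IZR (up (s/h))) by (simpl; ring).
    apply (Rmult_lt_compat_r h) in Hn1; auto. unfold Rdiv in Hn1. rewrite Rmult_assoc, Rinv_l in Hn1; lra. }
  assert (Hs2 : (IZR n + 1) * h <= s).
  { unfold n. rewrite minus_IZR.
    assert (IZR (up (s/h)) <= s / h + 1) by lra. apply (Rmult_le_compat_r h) in H; [|lra].
    unfold Rdiv in H. rewrite Rmult_plus_distr_r, Rmult_assoc, Rinv_l in H; [|lra]. simpl. lra. }
  destruct (Z_le_dec n m) as [Hle|Hlt].
  - exists m. apply IZR_le in Hle. nra.
  - exists n. assert (Hlt' : (m <= n)%Z) by lia. apply IZR_le in Hlt'. nra.
Qed.

Definition Pp A p := mapp (minv A) p.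
Definition Wv A p q := mapp (minv A) (psub q p).
Definition slope A p q := snd (Wv A p q) / fst (Wv A p q).
Definition ufun A p q x : pt := (x, snd (Pp A p) + slope A p q * (x - fst (Pp A p))).
Definition alpha A p q := Rmin (fst (Pp A p)) (fst (Pp A p) + fst (Wv A p q)).
Definition beta A p q := Rmax (fst (Pp A p)) (fst (Pp A p) + fst (Wv A p q)).
Definition hh xi := / (2 * INR xi).
Definition sg z := powerRZ (-1) (z + 1).

Lemma seg_param A p q t : in_SL2Z A -> fst (Wv A p q) <> 0 ->
  padd p (pscal t (psub q p)) = mapp A (ufun A p q (fst (Pp A p) + t * fst (Wv A p q))).
Proof.
  intros HA HW.
  assert (ufun A p q (fst (Pp A p) + t * fst (Wv A p q)) = padd (Pp A p) (pscal t (Wv A p q))).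
  { unfold ufun, slope, padd, pscal; simpl. f_equal; field; auto. }
  rewrite H, mapp_add, mapp_scal. unfold Pp, Wv. rewrite !mapp_inv_r by auto. reflexivity.
Qed.

Lemma s_range A p q t : 0 <= t <= 1 ->
  alpha A p q <= fst (Pp A p) + t * fst (Wv A p q) <= beta A p q.
Proof.
  intros Ht. unfold alpha, beta. set (a := fst (Pp A p)); set (w := fst (Wv A p q)).
  unfold Rmin, Rmax; destruct (Rle_dec a (a + w)); nra.
Qed.

Lemma ufun_seg A p q xx : in_SL2Z A -> fst (Wv A p q) <> 0 ->
  alpha A p q <= xx <= beta A p q -> seg p q (mapp A (ufun A p q xx)).
Proof.
  intros HA HW Hx. set (w := fst (Wv A p q)). set (a := fst (Pp A p)).
  exists ((xx - a) / w). split.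
  - unfold alpha, beta in Hx. fold a w in Hx. unfold Rmin, Rmax in Hx.
    destruct (Rle_dec a (a + w)).
    + assert (0 < w) by (destruct (Req_dec w 0); [contradiction|lra]). split; [apply Rdiv_le_0_compat; lra|].
      apply (Rmult_le_reg_r w); auto. unfold Rdiv; rewrite Rmult_assoc, Rinv_l; lra.
    + assert (w < 0) by lra.
      replace ((xx - a) / w) with ((a - xx) / (- w)) by (field; lra).
      split; [apply Rdiv_le_0_compat; lra|].
      apply (Rmult_le_reg_r (-w)); [lra|]. unfold Rdiv; rewrite Rmult_assoc, Rinv_l; lra.
  - rewrite (seg_param A) by auto. fold a w. replace (a + (xx - a) / w * w) with xx by (field; auto).
    reflexivity.
Qed.

Lemma phi0 xi z : (1 <= xi)%nat -> phi xi (IZR z * hh xi) = - sg z.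
Proof. intros. replace (IZR z * hh xi) with (IZR z * hh xi + 0 * hh xi) by ring.
  unfold hh, sg. rewrite phi_tooth by (auto; lra). ring. Qed.
Lemma phi1 xi z : (1 <= xi)%nat -> phi xi (IZR z * hh xi + hh xi) = sg z.
Proof. intros. replace (IZR z * hh xi + hh xi) with (IZR z * hh xi + 1 * hh xi) by ring.
  unfold hh, sg. rewrite phi_tooth by (auto; lra). ring. Qed.
Lemma phit xi z t : (1 <= xi)%nat -> 0 <= t <= 1 -> phi xi (IZR z * hh xi + t * hh xi) = sg z * (2 * t - 1).
Proof. intros. unfold hh, sg. rewrite phi_tooth by auto. ring. Qed.

Lemma J_tooth A p q eta xi z t : (1 <= xi)%nat -> 0 <= t <= 1 ->
  J eta xi (ufun A p q (IZR z * hh xi + t * hh xi)) =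
  padd (J eta xi (ufun A p q (IZR z * hh xi)))
       (pscal t (psub (J eta xi (ufun A p q (IZR z * hh xi + hh xi)))
                      (J eta xi (ufun A p q (IZR z * hh xi))))).
Proof.
  intros Hxi Ht. unfold J, ufun, padd, pscal, psub; simpl.
  rewrite phit, phi0, phi1 by auto.
  f_equal; ring.
Qed.

Lemma J_diff A p q eta xi z : (1 <= xi)%nat ->
  psub (J eta xi (ufun A p q (IZR z * hh xi + hh xi))) (J eta xi (ufun A p q (IZR z * hh xi)))
  = (hh xi, slope A p q * hh xi + 2 * eta * sg z).
Proof.
  intros Hxi. unfold J, ufun, psub; simpl. rewrite phi0, phi1 by auto. f_equal; ring.
Qed.

Lemma sg_sq z : sg z * sg z = 1.
Proof. unfold sg; destruct (sigma_pm (z+1)) as [-> | ->]; ring. Qed.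

Lemma J_point A p q eta xi z tau : (1 <= xi)%nat -> -1 <= tau <= 1 ->
  let t := (tau * sg z + 1) / 2 in
  (0 <= t <= 1) /\
  J eta xi (ufun A p q (IZR z * hh xi + t * hh xi)) =
  padd (ufun A p q (IZR z * hh xi + t * hh xi)) (0, eta * tau).
Proof.
  intros Hxi Htau t.
  assert (Ht : 0 <= t <= 1).
  { unfold t. destruct (sigma_pm (z+1)) as [E|E]; unfold sg; rewrite E; lra. }
  split; auto.
  unfold J, ufun, padd; simpl. rewrite phit by auto. f_equal. ring.
  replace (sg z * (2 * t - 1)) with (tau * (sg z * sg z)) by (unfold t; field).
  rewrite sg_sq. ring.
Qed.

Lemma v_pos A : in_SL2Z A -> 0 < pnorm (mapp A (0,1)).
Proof.
  intros H. apply det_R in H. apply pnorm_pos. unfold mapp; simpl.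
  destruct (Req_dec (IZR (mb A)) 0) as [E|E]; [right|left; lra].
  rewrite E in H. intro E2. assert (IZR (md A) = 0) by lra. rewrite H0 in H. lra.
Qed.

Lemma S_pos d : 0 < d -> 0 < sin (Rmin d 1).
Proof. intros. apply sin_gt_0. apply Rmin_glb_lt; lra. pose proof PI_RGT_0. pose proof PI2_1.
  pose proof (Rmin_r d 1). lra. Qed.

Lemma seg_bounds A p q delta l : in_SL2Z A -> 0 < delta -> 0 < l ->
  dir_dist (psub q p) (mapp A (0,1)) > delta -> dir_dist (psub p q) (mapp A (0,1)) > delta ->
  pdist p q > l ->
  Rabs (fst (Wv A p q)) > sin (Rmin delta 1) * pnorm (mapp A (0,1)) * l /\
  Rabs (slope A p q) <= Nm (minv A) / (sin (Rmin delta 1) * pnorm (mapp A (0,1))).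
Proof.
  intros HA Hd Hl H1 H2 H3.
  set (v := mapp A (0,1)) in *. set (d := psub q p).
  set (S1 := sin (Rmin delta 1)).
  assert (HS : 0 < S1) by (apply S_pos; auto).
  assert (HV : 0 < pnorm v) by (apply v_pos; auto).
  assert (Hd1 : pnorm d > l) by (unfold d; rewrite pnorm_opp_sub; exact H3).
  assert (E : psub p q = pscal (-1) d) by (unfold d; destruct p, q; unfold psub, pscal; simpl; f_equal; ring).
  rewrite E in H2.
  assert (Hm : Rmin delta 1 <= delta) by apply Rmin_l.
  assert (Hm0 : 0 < Rmin delta 1) by (apply Rmin_glb_lt; lra).
  assert (Hc : (cross d v)^2 > (sin (Rmin delta 1))^2 * (pdot d d * pdot v v)).
  { apply dir_hyp; auto; try lra. unfold d; lra. }
  fold S1 in Hc. rewrite <- (pnorm_sq d), <- (pnorm_sq v) in Hc.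
  assert (HW : fst (Wv A p q) = cross d v) by (unfold Wv; apply minv_fst_cross).
  assert (Hx : Rabs (fst (Wv A p q)) > S1 * pnorm v * pnorm d).
  { rewrite HW. set (c := cross d v) in *. pose proof (Rabs_pos c).
    assert (Rabs c * Rabs c = c ^ 2) by (rewrite <- Rabs_mult, Rabs_right; [ring| nra]).
    assert (0 <= S1 * pnorm v * pnorm d) by (pose proof (pnorm_nonneg d); pose proof (pnorm_nonneg v); apply Rmult_le_pos; nra).
    destruct (Rlt_dec (S1 * pnorm v * pnorm d) (Rabs c)); auto. nra. }
  split.
  - eapply Rgt_ge_trans. exact Hx. apply Rle_ge. apply Rmult_le_compat_l; [nra|lra].
  - assert (Hy : Rabs (snd (Wv A p q)) <= Nm (minv A) * pnorm d).
    { eapply Rle_trans. apply abs_snd_le. apply mapp_bound. }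
    assert (Hpx : 0 < Rabs (fst (Wv A p q))).
    { pose proof (pnorm_nonneg d). assert (0 < S1 * pnorm v * pnorm d) by (apply Rmult_lt_0_compat; nra). lra. }
    unfold slope. unfold Rdiv. rewrite Rabs_mult, Rabs_inv.
    apply (Rmult_le_reg_r (Rabs (fst (Wv A p q)))); auto.
    rewrite Rmult_assoc, Rinv_l by lra.
    apply Rle_trans with (Nm (minv A) * pnorm d); [lra|].
    assert (0 < S1 * pnorm v) by nra.
    pose proof (Nm_pos (minv A)).
    apply Rle_trans with (Nm (minv A) * / (S1 * pnorm v) * (S1 * pnorm v * pnorm d)).
    + right. field. nra.
    + apply Rmult_le_compat_l; [| lra]. apply Rmult_le_pos; [lra|]. apply Rlt_le, Rinv_0_lt_compat; auto.
Qed.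

Lemma wprime_bound sl h eta aeta amax z : Rabs sl <= amax -> amax * h < aeta -> Rabs eta = aeta -> 0 < h ->
  pnorm (h, sl * h + 2 * eta * sg z) > aeta.
Proof.
  intros H1 H2 H3 H4. eapply Rlt_le_trans; [|apply abs_snd_le]. simpl.
  assert (E : Rabs (2 * eta * sg z) = 2 * aeta).
  { rewrite !Rabs_mult, H3. unfold sg. destruct (sigma_pm (z+1)) as [-> | ->];
    rewrite ?Rabs_R1, ?Rabs_m1, Rabs_right by lra; ring. }
  pose proof (Rabs_triang_inv (2 * eta * sg z) (- (sl * h))).
  replace (2 * eta * sg z - - (sl * h)) with (sl * h + 2 * eta * sg z) in H by ring.
  rewrite Rabs_Ropp, E, Rabs_mult in H. rewrite (Rabs_right h) in H by lra.
  assert (Rabs sl * h <= amax * h) by (apply Rmult_le_compat_r; lra).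
  lra.
Qed.

Lemma norm_line x sl : pnorm (x, sl * x) <= Rabs x * (1 + Rabs sl).
Proof. eapply Rle_trans; [apply pnorm_le_abs|]. simpl. rewrite Rabs_mult. lra. Qed.

Theorem mainTheorem12 :
  forall (aeta eps' l delta delta' : R) (A : mat2Z),
    0 < aeta -> 0 < eps' -> 0 < l -> 0 < delta -> 0 < delta' ->
    in_SL2Z A ->
    let v := mapp A (0, 1) in
    exists xi0 : nat, (1 <= xi0)%nat /\
      forall (eta : R), Rabs eta = aeta ->
      forall (X : pt -> Prop) (eps : R) (I : Type) (p q : I -> pt)
             (gamma : pt -> Prop),
        (exists x, X x) ->
        0 < eps ->
        is_union_of_segs I p q gamma ->
        eps_dense gamma eps X ->
        (forall i, dir_dist (psub (q i) (p i)) v > delta /\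
                   dir_dist (psub (p i) (q i)) v > delta) ->
        (forall i, pdist (p i) (q i) > l) ->
        forall xi : nat, (xi0 <= xi)%nat ->
        exists (gamma' : pt -> Prop) (K : Type) (p' q' : K -> pt),
          (forall x, gamma' x ->
             img (fun y => mapp A (J eta xi (mapp (minv A) y))) gamma x) /\
          is_union_of_segs K p' q' gamma' /\
          eps_dense gamma' (eps + eps') (Str X (pscal eta v)) /\
          (forall k, dir_dist (psub (q' k) (p' k)) v <= delta' \/
                     dir_dist (psub (p' k) (q' k)) v <= delta') /\
          (forall k, pdist (p' k) (q' k) > Rabs eta / opnorm (minv A)).
Proof.
  intros aeta eps' l delta delta' A Haeta Heps' Hl Hd Hd' HA v.
  set (NA := Nm A). set (NB := Nm (minv A)).
  set (V := pnorm v). set (S1 := sin (Rmin delta 1)). set (S2 := sin (Rmin delta' 1)).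
  assert (HV : 0 < V) by (apply v_pos; auto).
  assert (HS1 : 0 < S1) by (apply S_pos; auto).
  assert (HS2 : 0 < S2) by (apply S_pos; auto).
  assert (HNA : 1 <= NA) by apply Nm_pos. assert (HNB : 1 <= NB) by apply Nm_pos.
  set (amax := NB / (S1 * V)).
  assert (Ham : 0 < amax) by (unfold amax; apply Rdiv_lt_0_compat; nra).
  set (L0 := S1 * V * l).
  set (H0 := Rmin (Rmin (L0/2) (eps' / (2 * NA * (1 + amax))))
                  (Rmin (aeta / (2 * amax)) (S2 * V * aeta / NB))).
  assert (HH0 : 0 < H0).
  { unfold H0, L0. repeat apply Rmin_glb_lt; apply Rdiv_lt_0_compat; (apply Rmult_lt_0_compat; [apply Rmult_lt_0_compat|]; lra) || lra. }
  destruct (archimed_cor1 H0 HH0) as [n0 [Hn0 Hn0pos]].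
  exists n0. split; [lia|].
  intros eta Heta X eps I p q gamma HXne Heps Hunion Hdense Hdir Hlen xi Hxi.
  assert (Hxi1 : (1 <= xi)%nat) by lia.
  set (h := hh xi).
  assert (Hxipos : 0 < INR xi) by (apply lt_0_INR; lia).
  assert (Hh : 0 < h) by (unfold h, hh; apply Rinv_0_lt_compat; lra).
  assert (HhH0 : h < H0).
  { assert (INR n0 <= INR xi) by (apply le_INR; auto).
    assert (0 < INR n0) by (apply lt_0_INR; auto).
    assert (/ INR xi <= / INR n0) by (apply Rinv_le_contravar; auto).
    assert (h < / INR xi).
    { unfold h, hh. apply Rinv_lt_contravar; nra. }
    lra. }
  assert (Hh1 : 2 * h <= L0).
  { assert (h <= L0 / 2). { eapply Rle_trans. left; exact HhH0. unfold H0.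
      eapply Rle_trans; apply Rmin_l. } lra. }
  assert (Hh2 : NA * (2 * h * (1 + amax)) <= eps').
  { assert (h <= eps' / (2 * NA * (1 + amax))).
    { eapply Rle_trans. left; exact HhH0. unfold H0.
      eapply Rle_trans; [apply Rmin_l| apply Rmin_r]. }
    apply (Rmult_le_compat_r (2 * NA * (1 + amax))) in H; [|nra].
    replace (eps' / (2 * NA * (1 + amax)) * (2 * NA * (1 + amax))) with eps' in H by (field; nra).
    nra. }
  assert (Hh3 : amax * h < aeta).
  { assert (h < aeta / (2 * amax)).
    { eapply Rlt_le_trans. exact HhH0. unfold H0.
      eapply Rle_trans; [apply Rmin_r| apply Rmin_l]. }
    apply (Rmult_lt_compat_l amax) in H; auto.
    replace (amax * (aeta / (2 * amax))) with (aeta / 2) in H by (field; lra). lra. }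
  assert (Hh4 : h * NB <= S2 * V * aeta).
  { assert (h <= S2 * V * aeta / NB).
    { eapply Rle_trans. left; exact HhH0. unfold H0.
      eapply Rle_trans; apply Rmin_r. }
    apply (Rmult_le_compat_r NB) in H; [|lra].
    replace (S2 * V * aeta / NB * NB) with (S2 * V * aeta) in H by (field; lra). lra. }
  assert (Hseg : forall i, Rabs (fst (Wv A (p i) (q i))) > L0 /\ Rabs (slope A (p i) (q i)) <= amax).
  { intro i. destruct (Hdir i). apply seg_bounds; auto. }
  assert (HWnz : forall i, fst (Wv A (p i) (q i)) <> 0).
  { intros i E. destruct (Hseg i) as [H1 _]. rewrite E, Rabs_R0 in H1.
    unfold L0 in H1. assert (0 < S1 * V * l) by (repeat apply Rmult_lt_0_compat; lra). lra. }
  set (fits := fun (iz : I * Z) => alpha A (p (fst iz)) (q (fst iz)) <= IZR (snd iz) * h /\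
                 IZR (snd iz) * h + h <= beta A (p (fst iz)) (q (fst iz))).
  set (K := {iz : I * Z | fits iz}).
  set (p' := fun k : K => mapp A (J eta xi (ufun A (p (fst (proj1_sig k))) (q (fst (proj1_sig k)))
                                                  (IZR (snd (proj1_sig k)) * h)))).
  set (q' := fun k : K => mapp A (J eta xi (ufun A (p (fst (proj1_sig k))) (q (fst (proj1_sig k)))
                                                  (IZR (snd (proj1_sig k)) * h + h)))).
  assert (Htooth : forall k t, 0 <= t <= 1 ->
     padd (p' k) (pscal t (psub (q' k) (p' k))) =
     mapp A (J eta xi (ufun A (p (fst (proj1_sig k))) (q (fst (proj1_sig k)))
                                                  (IZR (snd (proj1_sig k)) * h + t * h)))).
  { intros k t Ht. unfold p', q', h. rewrite <- mapp_sub, <- mapp_scal, <- mapp_add.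
    rewrite J_tooth by auto. reflexivity. }
  assert (Hdiff : forall k, psub (q' k) (p' k) =
     mapp A (h, slope A (p (fst (proj1_sig k))) (q (fst (proj1_sig k))) * h + 2 * eta * sg (snd (proj1_sig k)))).
  { intros k. unfold p', q', h. rewrite <- mapp_sub, J_diff by auto. reflexivity. }
  exists (fun y => exists k, seg (p' k) (q' k) y), K, p', q'.
  split; [|split; [|split; [|split]]].
  -
    intros y [k [t [Ht Hy]]].
    rewrite Htooth in Hy by auto.
    destruct k as [[i z] Hf]. simpl in Hy. unfold fits in Hf; simpl in Hf.
    exists (mapp A (ufun A (p i) (q i) (IZR z * h + t * h))). split.
    + apply Hunion. exists i. apply ufun_seg; auto. nra.
    + rewrite mapp_inv_l by auto. exact Hy.
  - intro x; split; auto.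
  -
    intros y [x0 [tau [HX [Htau Hy]]]].
    destruct (Hdense x0 HX) as [g [Hg Hgd]].
    destruct (proj1 (Hunion g) Hg) as [i [t [Ht Hgt]]].
    rewrite (seg_param A) in Hgt by auto.
    set (s := fst (Pp A (p i)) + t * fst (Wv A (p i) (q i))) in Hgt.
    pose proof (s_range A (p i) (q i) t Ht) as Hs. fold s in Hs.
    assert (Hab : 2 * h <= beta A (p i) (q i) - alpha A (p i) (q i)).
    { destruct (Hseg i) as [HW _]. revert HW. unfold alpha, beta, Rmin, Rmax.
      destruct (Rle_dec _ _); unfold Rabs; destruct (Rcase_abs _); intros; lra. }
    destruct (select h _ _ s Hh Hs Hab) as [z [Hz1 [Hz2 Hz3]]].
    assert (Hf : fits (i, z)) by (split; auto).
    set (k := exist fits (i, z) Hf : K).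
    destruct (J_point A (p i) (q i) eta xi z tau Hxi1 Htau) as [Hts HJ].
    set (t' := (tau * sg z + 1) / 2) in *.
    exists (padd (p' k) (pscal t' (psub (q' k) (p' k)))). split.
    + exists k, t'. split; auto.
    + rewrite Htooth by auto. simpl. fold h in HJ. rewrite HJ. subst y.
      set (U := ufun A (p i) (q i) (IZR z * h + t' * h)).
      assert (Eid : psub (mapp A (padd U (0, eta * tau))) (padd x0 (pscal tau (pscal eta v))) =
                    padd (mapp A (psub U (ufun A (p i) (q i) s))) (psub g x0)).
      { rewrite Hgt. unfold v, U, ufun. destruct x0. unfold mapp, padd, psub, pscal; simpl. f_equal; ring. }
      unfold pdist. rewrite Eid.
      eapply Rle_lt_trans. apply pnorm_triangle.
      unfold pdist in Hgd.
      assert (pnorm (mapp A (psub U (ufun A (p i) (q i) s))) <= eps'); [|lra].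
      eapply Rle_trans. apply mapp_bound. fold NA.
      assert (EU : psub U (ufun A (p i) (q i) s) =
                   (IZR z * h + t' * h - s, slope A (p i) (q i) * (IZR z * h + t' * h - s))).
      { unfold U, ufun, psub; simpl. f_equal; ring. }
      rewrite EU. eapply Rle_trans; [apply Rmult_le_compat_l; [lra| apply norm_line]|].
      eapply Rle_trans; [|exact Hh2]. apply Rmult_le_compat_l; [lra|].
      destruct (Hseg i) as [_ Hsl].
      pose proof (Rabs_pos (slope A (p i) (q i))).
      assert (0 <= t' * h <= h) by (split; nra).
      apply Rmult_le_compat.
      * apply Rabs_pos.
      * lra.
      * apply Rabs_le. lra.
      * lra.
  -
    intro k. set (D := psub (q' k) (p' k)).
    set (w' := (h, slope A (p (fst (proj1_sig k))) (q (fst (proj1_sig k))) * h + 2 * eta * sg (snd (proj1_sig k)))).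
    assert (HBD : mapp (minv A) D = w') by (unfold D; rewrite Hdiff, mapp_inv_l; auto).
    assert (Hw : pnorm w' > aeta).
    { apply (wprime_bound _ _ _ _ amax); auto. apply Hseg. }
    assert (HwD : pnorm w' <= NB * pnorm D) by (rewrite <- HBD; apply mapp_bound).
    assert (Hcr : cross D v = h).
    { unfold v. rewrite <- minv_fst_cross, HBD. reflexivity. }
    assert (HDpos : 0 < pnorm D) by (pose proof (pnorm_nonneg D); nra).
    assert (Hdd : 0 < Rmin delta' 1 <= 1) by (split; [apply Rmin_glb_lt; lra | apply Rmin_r]).
    assert (Hlt : h < S2 * V * pnorm D).
    { assert (S2 * V * aeta < S2 * V * (NB * pnorm D)).
      { apply Rmult_lt_compat_l; [apply Rmult_lt_0_compat; lra | lra]. }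
      nra. }
    destruct (dir_concl D v (Rmin delta' 1) Hdd HDpos HV) as [H1|H1].
    + rewrite Hcr, <- (pnorm_sq D), <- (pnorm_sq v). fold S2 V.
      assert (0 <= h * h <= (S2 * V * pnorm D) * (S2 * V * pnorm D)) by (split; nra).
      nra.
    + left. pose proof (Rmin_l delta' 1). lra.
    + right. replace (psub (p' k) (q' k)) with (pscal (-1) D).
      pose proof (Rmin_l delta' 1). lra.
      unfold D. destruct (p' k), (q' k); unfold pscal, psub; simpl; f_equal; ring.
  -
    intro k. unfold pdist. rewrite pnorm_opp_sub, Hdiff.
    set (w' := (h, slope A (p (fst (proj1_sig k))) (q (fst (proj1_sig k))) * h + 2 * eta * sg (snd (proj1_sig k)))).
    assert (Hw : pnorm w' > aeta).
    { apply (wprime_bound _ _ _ _ amax); auto. apply Hseg. }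
    pose proof (opnorm_lower A w' HA) as Ho.
    set (o := opnorm (minv A)) in *. set (P := pnorm (mapp A w')) in *.
    assert (HP : 0 <= P) by apply pnorm_nonneg.
    assert (Hop : 0 < o).
    { destruct (Rlt_dec 0 o); auto. exfalso. assert (o * P <= 0) by nra. lra. }
    rewrite Heta. apply Rlt_gt.
    apply (Rmult_lt_reg_r o); auto.
    replace (aeta / o * o) with aeta by (field; lra). lra.
Qed.
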